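(* Let $\mathcal C$ be a real polynomial curve with proper real polynomial parametrization $(x(t),y(t))$. If $r=\deg_t x(t)$ and $s=\deg_t y(t)$ are both odd and $r\ne s$, then $\mathcal C$ does not have mirror symmetry.
   Context: A real polynomial curve is $\mathcal C=\{(x(t),y(t)):t\in\mathbb R\}$ with $x,y\in\mathbb R[t]$ not both constant; the parametrization is proper if it is injective for almost all $t$. $\mathcal C$ has mirror symmetry if there is a line such that the reflection in it maps $\mathcal C$ onto itself. *)

(* Defs.v *)
From HB Require Import structures.
From mathcomp Require Import all_boot all_order all_algebra.
Set Implicit Arguments. Unset Strict Implicit. Unset Printing Implicit Defensive.
Import Order.TTheory GRing.Theory Num.Theory.
Local Open Scope ring_scope.

Section Curves.
Variable R : rcfType.

Definition curve_pt (x y : {poly R}) (t : R) : R * R := (x.[t], y.[t]).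

Definition on_curve (x y : {poly R}) (P : R * R) : Prop :=
  exists t : R, P = curve_pt x y t.

(* Proper parametrization: injective for almost all t, i.e. outside a finite
   exceptional set S of parameters, t1 is the only parameter of its point. *)
Definition proper_param (x y : {poly R}) : Prop :=
  exists S : seq R, forall t1 t2 : R, t1 \notin S ->
    curve_pt x y t1 = curve_pt x y t2 -> t1 = t2.

(* Reflection in the line a*X + b*Y = c (with (a,b) <> (0,0)). *)
Definition line_reflection (a b c : R) (P : R * R) : R * R :=
  let k := 2 * (a * P.1 + b * P.2 - c) / (a ^+ 2 + b ^+ 2) in
  (P.1 - k * a, P.2 - k * b).

Definition mirror_symmetric (x y : {poly R}) : Prop :=
  exists a b c : R, (a, b) != (0, 0) /\
    (forall P, on_curve x y P -> on_curve x y (line_reflection a b c P)) /\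
    (forall Q, on_curve x y Q ->
       exists P, on_curve x y P /\ line_reflection a b c P = Q).

End Curves.

(* Main.v *)
Require Import Defs.
From HB Require Import structures.
From mathcomp Require Import all_boot all_order all_algebra.
From mathcomp.real_closed Require Import polyrcf.
Import Order.TTheory GRing.Theory Num.Theory.
Local Open Scope ring_scope.
From mathcomp Require Import ring.

Lemma neg_side (R : rcfType) (g : {poly R}) :
  0 < lead_coef g -> odd (size g).-1 ->
  exists n : R, forall x, n <= x -> g.[- x] < 0.
Proof.
move=> lc0 od.
pose g' := - (g \Po - 'X).
have lc' : lead_coef g' = lead_coef g.
  rewrite /g' lead_coefN lead_coef_comp ?size_polyN ?size_polyX //.
  rewrite lead_coefN lead_coefX -signr_odd od /=; rewrite mulrN1 opprK //.
rewrite -lc' in lc0.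
have [n Hn] := poly_pinfty_gt_lc lc0.
exists n => x /Hn; rewrite /g' hornerN horner_comp hornerN hornerX.
by move=> H; rewrite -oppr_gt0; apply: lt_le_trans H.
Qed.

Lemma core (R : rcfType) (g h : {poly R}) :
  0 < lead_coef g -> 0 < lead_coef h -> odd (size g).-1 ->
  ~ (forall t, exists u, g.[u] = g.[t] /\ h.[u] = - h.[t]).
Proof.
move=> lg lh od H.
have sz : (1 < size g)%N by case: (size g) od => [|[|k]].
have [n1 H1] := poly_pinfty_gt_lc lh.
have [n3 H3] := neg_side _ _ lg od.
have [ub Hub] := poly_itv_bound g (- n3) n1.
have [n4 H4] := @poly_lim_infty _ g (`|ub| + 1) lg sz.
pose t := Num.max n1 n4.
have [u [gu hu]] := H t.
have ht : 0 < h.[t] by apply: lt_le_trans lh (H1 _ _); rewrite le_max lexx.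
have gt : `|ub| + 1 <= g.[t] by apply: H4; rewrite le_max lexx orbT.
have [un1|un1] := lerP n1 u.
  have : 0 < h.[u] by apply: lt_le_trans lh (H1 _ un1).
  by rewrite hu oppr_gt0 ltNge (ltW ht).
have [un3|un3] := lerP u (- n3).
  have : g.[u] < 0 by rewrite -(opprK u); apply: H3; rewrite lerNr.
  rewrite gu ltNge => /negP; apply; apply: le_trans gt.
  by rewrite addr_ge0.
have := Hub u; rewrite (ltW un3) (ltW un1) /= => /(_ isT) Hu.
have : g.[u] <= `|ub| by apply: le_trans (ler_norm _) (le_trans Hu (ler_norm _)).
rewrite gu => Hg; move: (le_trans gt Hg); by rewrite gerDl ler10.
Qed.

Lemma comb_odd (R : rcfType) (x y : {poly R}) (a b : R) : (a, b) != (0, 0) ->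
  odd (size x).-1 -> odd (size y).-1 -> (size x).-1 <> (size y).-1 ->
  odd (size (a *: x + b *: y)).-1.
Proof.
move=> ab ox oy dxy.
have [a0 | a0] := eqVneq a 0.
  rewrite a0 in ab *.
  have b0 : b != 0 by apply: contraNneq ab => ->.
  by rewrite scale0r add0r size_scale.
have [b0 | b0] := eqVneq b 0.
  by rewrite b0 scale0r addr0 size_scale.
have [lt|gt|eq] := ltngtP (size x) (size y).
- by rewrite addrC size_polyDl !size_scale.
- by rewrite size_polyDl !size_scale.
- by rewrite eq in dxy.
Qed.

Lemma sq_pos (R : rcfType) (l : R) : l != 0 -> 0 < l * l.
Proof. by move=> l0; rewrite lt_def mulf_neq0 // -expr2 sqr_ge0. Qed.

Theorem corollary17 (R : rcfType) (x y : {poly R}) :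
  (1 < size x)%N \/ (1 < size y)%N ->
  proper_param x y ->
  odd (size x).-1 -> odd (size y).-1 -> (size x).-1 <> (size y).-1 ->
  ~ mirror_symmetric x y.
Proof.
move=> _ _ ox oy dxy [a [b [c [ab [H _]]]]].
have n2 : a ^+ 2 + b ^+ 2 != 0.
  apply: contra ab; rewrite paddr_eq0 ?sqr_ge0 // !expf_eq0 /= => /andP[/eqP-> /eqP->] //.
pose g := (- b) *: x + a *: y.
pose h0 := a *: x + b *: y.
pose h := h0 - c%:P.
have og : odd (size g).-1.
  apply: comb_odd => //; apply: contra ab; rewrite !xpair_eqE oppr_eq0 andbC //.
have oh0 : odd (size h0).-1 by apply: comb_odd.
have oh : odd (size h).-1.
  rewrite /h size_polyDl // size_polyN size_polyC.
  by case: (size h0) oh0 => [|[|k]] //; case: (c != 0).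
have key : forall t, exists u, g.[u] = g.[t] /\ h.[u] = - h.[t].
  move=> t; have [u hu] := H _ (ex_intro _ t erefl).
  move: hu; rewrite /line_reflection /curve_pt /= => -[e1 e2].
  exists u; rewrite /g /h /h0 !hornerE -e1 -e2; split; first by ring.
  by field.
have gnz : lead_coef g != 0.
  by rewrite lead_coef_eq0; apply: contraTneq og => ->; rewrite size_poly0.
have hnz : lead_coef h != 0.
  by rewrite lead_coef_eq0; apply: contraTneq oh => ->; rewrite size_poly0.
apply: (@core R (lead_coef g *: g) (lead_coef h *: h)).
- by rewrite lead_coefZ sq_pos.
- by rewrite lead_coefZ sq_pos.
- by rewrite size_scale.
- move=> t; have [u [e1 e2]] := key t; exists u.
  by rewrite !hornerZ e1 e2 mulrN.
Qed.
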